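(* Let $k\in\mathbb{N}$ and let $P$ be a path with $k$ edges whose vertices in order are $x_0,x_1,\dots,x_k$. Let $L$ be an $m$-assignment for $P$ with $m\ge 2$. For each $(c,d)\in L(x_0)\times L(x_k)$, let $N(c,d)$ be the number of proper $L$-colorings of $P$ in which $x_0$ is colored $c$ and $x_k$ is colored $d$. Then for every such $(c,d)$, $$N(c,d)\ge \min\left\{\frac{(m-1)^k-(-1)^k}{m},\ \frac{(m-1)^k-(-1)^k}{m}+(-1)^k\right\}.$$ Moreover, there is a partition $\{A,B\}$ of $L(x_0)\times L(x_k)$ with $|A|=m$ and $|B|=m(m-1)$ such that $N(c,d)\ge \frac{(m-1)^k-(-1)^k}{m}+(-1)^k$ for all $(c,d)\in A$ and $N(c,d)\ge \frac{(m-1)^k-(-1)^k}{m}$ for all $(c,d)\in B$.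
   Context: An $m$-assignment $L$ for a graph assigns to each vertex $v$ a set $L(v)$ of exactly $m$ colors; a proper $L$-coloring is a proper vertex coloring $f$ with $f(v)\in L(v)$ for every vertex $v$. *)

(* Defs.v *)
From mathcomp Require Import all_boot all_order all_algebra.
Set Implicit Arguments. Unset Strict Implicit. Unset Printing Implicit Defensive.
Import Order.TTheory GRing.Theory Num.Theory.

(* The path P with k edges has vertices x_0,...,x_k, represented by 'I_k.+1;
   its edges are {x_i, x_{i+1}} for i < k. Colors come from a finite type C.
   A list assignment is L : 'I_k.+1 -> {set C}. *)

Definition proper_Lcol (k : nat) (C : finType) (L : 'I_k.+1 -> {set C})
    (f : {ffun 'I_k.+1 -> C}) : bool :=
  [forall i : 'I_k.+1, f i \in L i] &&
  [forall i : 'I_k, f (widen_ord (leqnSn k) i) != f (lift ord0 i)].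

Definition Ncount (k : nat) (C : finType) (L : 'I_k.+1 -> {set C}) (c d : C) : nat :=
  #|[set f : {ffun 'I_k.+1 -> C} |
      [&& proper_Lcol L f, f ord0 == c & f ord_max == d]]|.

Definition m_assignment (k : nat) (C : finType) (L : 'I_k.+1 -> {set C}) (m : nat) : Prop :=
  forall v, #|L v| = m.

(* Main.v *)
Require Import Defs.
From mathcomp Require Import all_boot all_order all_algebra.
From mathcomp Require Import zify ring.
Import Order.TTheory GRing.Theory Num.Theory.

Section Rec.
Variables (k : nat) (C : finType) (L : 'I_k.+2 -> {set C}).
Definition Lr : 'I_k.+1 -> {set C} := fun i => L (widen_ord (leqnSn k.+1) i).

Definition hext (p : {ffun 'I_k.+1 -> C} * C) : {ffun 'I_k.+2 -> C} :=
  [ffun i => if unlift ord_max i is Some j then p.1 j else p.2].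
Definition hres (f : {ffun 'I_k.+2 -> C}) : {ffun 'I_k.+1 -> C} * C :=
  ([ffun i => f (widen_ord (leqnSn k.+1) i)], f ord_max).

Lemma widen_lift (i : 'I_k.+1) : widen_ord (leqnSn k.+1) i = lift ord_max i.
Proof. by apply: val_inj; rewrite /= /bump /= leqNgt ltn_ord. Qed.

Lemma hext_w g x i : hext (g, x) (widen_ord (leqnSn k.+1) i) = g i.
Proof. by rewrite ffunE widen_lift liftK. Qed.
Lemma hext_max g x : hext (g, x) ord_max = x.
Proof. by rewrite ffunE unlift_none. Qed.

Lemma hext_bij : bijective hext.
Proof.
exists hres.
- case=> g x; rewrite /hres hext_max; congr pair; apply/ffunP => i.
  by rewrite ffunE hext_w.
- move=> f; apply/ffunP => i; rewrite ffunE /=.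
  case: unliftP => [j ->|-> //]; by rewrite ffunE widen_lift.
Qed.

Lemma hext_0 g x : hext (g, x) ord0 = g ord0.
Proof.
have -> : (ord0 : 'I_k.+2) = widen_ord (leqnSn k.+1) ord0 by apply: val_inj.
by rewrite hext_w.
Qed.

Lemma proper_hext g x :
  proper_Lcol L (hext (g, x)) =
  [&& proper_Lcol Lr g, x \in L ord_max & g ord_max != x].
Proof.
rewrite /proper_Lcol.
apply/idP/idP.
- case/andP => /forallP H1 /forallP H2.
  apply/and3P; split.
  + apply/andP; split.
    * apply/forallP => i; move: (H1 (widen_ord (leqnSn k.+1) i)).
      by rewrite hext_w.
    * apply/forallP => i.
      move: (H2 (widen_ord (leqnSn k) i)).
      have -> : (lift ord0 (widen_ord (leqnSn k) i) : 'I_k.+2)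
              = widen_ord (leqnSn k.+1) (lift ord0 i) by apply: val_inj.
      by rewrite !hext_w.
  + by move: (H1 ord_max); rewrite hext_max.
  + move: (H2 ord_max).
    have -> : (lift ord0 (ord_max : 'I_k.+1) : 'I_k.+2) = ord_max by apply: val_inj.
    by rewrite hext_max hext_w.
- case/and3P => /andP [/forallP H1 /forallP H2] Hx Hg.
  apply/andP; split.
  + apply/forallP => i; case: (unliftP ord_max i) => [j ->|->].
    * by rewrite -widen_lift hext_w.
    * by rewrite hext_max.
  + apply/forallP => i; case: (unliftP ord_max i) => [j ->|->].
    * have -> : (lift ord0 (lift ord_max j) : 'I_k.+2)
              = widen_ord (leqnSn k.+1) (lift ord0 j).
        by apply: val_inj; rewrite /= /bump /= leqNgt ltn_ord.
      have -> : widen_ord (leqnSn k.+1) (lift ord_max j)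
              = widen_ord (leqnSn k.+1) (widen_ord (leqnSn k) j).
        by apply: val_inj; rewrite /= /bump /= leqNgt ltn_ord.
      by rewrite !hext_w.
    * have -> : (lift ord0 (ord_max : 'I_k.+1) : 'I_k.+2) = ord_max by apply: val_inj.
      by rewrite hext_max hext_w.
Qed.

Lemma Ncount_rec c d : d \in L ord_max ->
  Ncount L c d = \sum_(e in Lr ord_max :\ d) Ncount Lr c e.
Proof.
move=> Hd.
rewrite /Ncount -sum1_card big_mkcond /=.
rewrite (reindex hext); last by apply: onW_bij; exact: hext_bij.
rewrite (_ : \sum_j _ = \sum_g \sum_x (if hext (g, x) \in [set f | proper_Lcol L f & (f ord0 == c) && (f ord_max == d)] then 1 else 0)); last first.
  by rewrite pair_bigA; apply: eq_bigr; case.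
under eq_bigr => g _.
  under eq_bigr => x _ do rewrite inE proper_hext hext_0 hext_max.
  over.
rewrite /=.
symmetry; under eq_bigr => e _ do rewrite -sum1_card big_mkcond /=.
rewrite exchange_big /=; symmetry; apply: eq_bigr => g _.
rewrite (bigD1 d) //= big1 ?addn0; last first.
  by move=> x /negbTE Hx; rewrite Hx !andbF.
rewrite Hd eqxx !andbT.
under eq_bigr => e _ do rewrite inE.
case Hg: (proper_Lcol Lr g); last by rewrite /= big1.
case Hc: (g ord0 == c); last by rewrite /= andbF big1 // => e _; rewrite andbF.
rewrite andbT.
have Hm : g ord_max \in Lr ord_max by move: Hg => /andP [/forallP ->].
rewrite big_mkcond /= (bigD1 (g ord_max)) //= big1 ?addn0; last first.
  by move=> e /negbTE; rewrite eq_sym => ->; case: ifP.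
by rewrite eqxx !inE Hm andbT.
Qed.
End Rec.
Arguments Lr {k C} L _.

Fixpoint sa (n k : nat) : nat :=
  match k with 0 => 0
  | k'.+1 => if odd k' then n.+1 * sa n k' - 1 else n.+1 * sa n k' + 1 end.

Lemma sa_pos n k : odd k -> 0 < sa n k.
Proof. case: k => //= k; case: (odd k) => //= _; lia. Qed.

Lemma sum_lb (C : finType) (S : {set C}) (x : C -> nat) a :
  (forall e, e \in S -> a <= x e) -> #|S| * a <= \sum_(e in S) x e.
Proof. move=> H; rewrite -sum_nat_const; exact: leq_sum. Qed.

Lemma sum_lb1 (C : finType) (S : {set C}) (x : C -> nat) a e0 :
  (forall e, e \in S -> e != e0 -> a <= x e) ->
  (forall e, e \in S -> a <= x e + 1) ->
  #|S| * a <= \sum_(e in S) x e + 1.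
Proof.
move=> H1 H2.
case E: (e0 \in S).
- rewrite (big_setD1 _ E) (cardsD1 e0 S) E /=.
  have h3 : #|S :\ e0| * a <= \sum_(e in S :\ e0) x e.
    by apply: sum_lb => e; rewrite in_setD1 => /andP [Hne He]; exact: H1.
  have := H2 _ E.
  rewrite mulSn; lia.
- apply: leq_trans (leq_addr 1 _); apply: sum_lb => e He; apply: H1 => //.
  by apply/eqP => Ee; rewrite -Ee He in E.
Qed.

Lemma inv (n : nat) (C : finType) (k : nat) :
  forall (L : 'I_k.+1 -> {set C}), m_assignment L n.+2 ->
  forall c, c \in L ord0 ->
  if odd k then
    (exists e0, forall e, e \in L ord_max -> e != e0 -> sa n k <= Ncount L c e) /\
    (forall e, e \in L ord_max -> sa n k <= Ncount L c e + 1)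
  else
    (forall e, e \in L ord_max -> sa n k <= Ncount L c e) /\
    (exists2 e, e \in L ord_max & sa n k + 1 <= Ncount L c e).
Proof.
elim: k => [|k IH] L HL c Hc.
- rewrite /=; split => // ; exists c.
    by have -> : (ord_max : 'I_1) = ord0 by apply: val_inj.
  rewrite /Ncount card_gt0; apply/set0Pn; exists [ffun => c].
  rewrite inE !ffunE eqxx andbT /proper_Lcol andbT; apply/andP; split; apply/forallP => i.
  + rewrite ffunE; have -> : i = ord0 by apply: val_inj; case: i => [[]].
    exact: Hc.
  + by case: i.
- have HLr : m_assignment (Lr L) n.+2 by move=> v; apply: HL.
  have Hc' : c \in Lr L ord0.
    by rewrite /Lr; have -> : widen_ord (leqnSn k.+1) ord0 = ord0 by apply: val_inj.
  have {IH} := IH (Lr L) HLr c Hc'.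
  set x := fun e => Ncount (Lr L) c e.
  have Hrec : forall d, d \in L ord_max -> Ncount L c d = \sum_(e in Lr L ord_max :\ d) x e.
    by move=> d Hd; rewrite Ncount_rec.
  have HS : forall d, n.+1 <= #|Lr L ord_max :\ d|.
    move=> d; have := cardsD1 d (Lr L ord_max); rewrite HLr.
    by case: (d \in Lr L ord_max) => /= ; lia.
  rewrite /= -/x.
  case Ok: (odd k) => /=.
  +
    case=> [[e0 Hlow] Hall1].
    have apos := sa_pos n k Ok.
    split.
    * move=> d Hd; rewrite Hrec //.
      have h := @sum_lb1 _ (Lr L ord_max :\ d) x (sa n k) e0.
      have h' : #|Lr L ord_max :\ d| * sa n k <= \sum_(e in Lr L ord_max :\ d) x e + 1.
        apply: h => e; rewrite in_setD1 => /andP [_ He]; [exact: Hlow | exact: Hall1].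
      have := leq_mul (HS d) (leqnn (sa n k)); lia.
    * have [d Hd Hdd] : exists2 d, d \in L ord_max &
          [|| d == e0, d \notin Lr L ord_max | e0 \notin Lr L ord_max].
        case E0: (e0 \in Lr L ord_max).
        - have : ~~ (L ord_max \subset Lr L ord_max :\ e0).
            apply/negP => /subset_leq_card; rewrite HL.
            have := cardsD1 e0 (Lr L ord_max); rewrite HLr E0 /=; lia.
          case/subsetPn => d Hd; rewrite in_setD1 negb_and negbK => Hdd.
          by exists d => //; rewrite orbF.
        - have : L ord_max != set0 by rewrite -card_gt0 HL.
          by case/set0Pn => d Hd; exists d => //; rewrite /= !orbT.
      exists d => //; rewrite Hrec //.
      have Hsub : forall e, e \in Lr L ord_max :\ d -> e \in Lr L ord_max.
        by move=> e; rewrite in_setD1 => /andP [].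
      case E: (e0 \in Lr L ord_max :\ d).
      + move: E Hdd; rewrite in_setD1 => /andP [Hne E0].
        rewrite [d == e0]eq_sym (negbTE Hne) E0 /= orbF => Hnd.
        have h' := @sum_lb1 _ (Lr L ord_max :\ d) x (sa n k) e0
          (fun e He => Hlow e (Hsub e He)) (fun e He => Hall1 e (Hsub e He)).
        have := cardsD1 d (Lr L ord_max); rewrite HLr (negbTE Hnd) /= => hc.
        rewrite add0n in hc; move: h'; rewrite -hc mulSn; lia.
      + have h' : #|Lr L ord_max :\ d| * sa n k <= \sum_(e in Lr L ord_max :\ d) x e.
          apply: sum_lb => e He; apply: Hlow; first exact: Hsub.
          by apply/eqP => Ee; rewrite -Ee He in E.
        have := leq_mul (HS d) (leqnn (sa n k)); lia.
  + case=> Hall [e1 He1 Hbig].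
    split.
    * exists e1 => d Hd Hne; rewrite Hrec //.
      have E1 : e1 \in Lr L ord_max :\ d by rewrite in_setD1 eq_sym Hne.
      rewrite (big_setD1 _ E1) /=.
      have h := @sum_lb _ (Lr L ord_max :\ d :\ e1) x (sa n k).
      have h' : #|Lr L ord_max :\ d :\ e1| * sa n k <= \sum_(e in Lr L ord_max :\ d :\ e1) x e.
        by apply: h => e; rewrite !in_setD1 => /and3P [_ _ He]; exact: Hall.
      have := cardsD1 e1 (Lr L ord_max :\ d); rewrite E1 /= => hc.
      have := HS d; rewrite hc => hn.
      have := leq_mul (hn : n <= #|Lr L ord_max :\ d :\ e1|) (leqnn (sa n k)).
      move: Hbig; rewrite -/(x e1) mulSn; lia.
    * move=> d Hd; rewrite Hrec //.
      have h := @sum_lb _ (Lr L ord_max :\ d) x (sa n k).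
      have h' : #|Lr L ord_max :\ d| * sa n k <= \sum_(e in Lr L ord_max :\ d) x e.
        by apply: h => e; rewrite in_setD1 => /andP [_ He]; exact: Hall.
      have := leq_mul (HS d) (leqnn (sa n k)); lia.
Qed.

Lemma assemble (C : finType) (L0 Lk : {set C}) m (Q : C -> C -> bool) :
  #|L0| = m -> #|Lk| = m ->
  (forall c, c \in L0 -> exists d, (d \in Lk) && Q c d) ->
  exists A B : {set C * C},
    [/\ A :|: B = setX L0 Lk, A :&: B = set0, #|A| = m & #|B| = (m * (m - 1))%N] /\
    (forall c d, (c, d) \in A -> [&& c \in L0, d \in Lk & Q c d]) /\
    (forall c d, (c, d) \in B -> [/\ c \in L0, d \in Lk & exists2 d', Q c d' & d' != d]).
Proof.
move=> H0 Hk Hex.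
pose ds c := odflt c [pick d | (d \in Lk) && Q c d].
have Hds : forall c, c \in L0 -> (ds c \in Lk) && Q c (ds c).
  move=> c Hc; rewrite /ds; case: pickP => [d Hd //|Hn].
  by case: (Hex c Hc) => d; rewrite Hn.
pose A := [set (c, ds c) | c in L0].
have sub : A \subset setX L0 Lk.
  apply/subsetP => p /imsetP [c Hc ->]; rewrite inE /=.
  by case/andP: (Hds c Hc) => -> _; rewrite Hc.
exists A, (setX L0 Lk :\: A); split; [split|split].
- apply/setP => p; rewrite in_setU in_setD.
  by case E: (p \in A) => //=; rewrite (subsetP sub p E).
- by apply/setP => p; rewrite in_setI in_setD in_set0; case: (p \in A).
- by rewrite card_imset ?H0 // => c1 c2 [].
- rewrite cardsDS // cardsX card_imset ?H0 ?Hk; last by move=> c1 c2 [].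
  by rewrite mulnBr muln1.
- move=> c d /imsetP [c' Hc' [-> ->]].
  by rewrite Hc'; case/andP: (Hds c' Hc') => -> ->.
- move=> c d; rewrite in_setD inE /= => /and3P [HnA Hc Hd].
  split => //; exists (ds c); first by case/andP: (Hds c Hc).
  apply/eqP => E; move: HnA; rewrite -E.
  by rewrite (imset_f (fun c => (c, ds c)) Hc).
Qed.

Local Open Scope ring_scope.

Lemma sa_formula n k :
  (((n.+2)%:R - 1) ^+ k - (-1) ^+ k) / (n.+2)%:R = (sa n k)%:R :> rat.
Proof.
have H : forall k, (sa n k)%:R * (n.+2)%:R = ((n.+1)%:R ^+ k - (-1) ^+ k) :> rat.
  elim=> [|j IH] /=; first by rewrite mul0r expr0 subrr.
  have Hs : (-1) ^+ j = (-1) ^+ odd j :> rat by rewrite signr_odd.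
  case Ok: (odd j).
  - have hp := sa_pos n j Ok.
    rewrite natrB; last by rewrite muln_gt0.
    rewrite natrM mulrBl -mulrA IH !exprS Hs Ok expr1.
    rewrite -addn2 -addn1 !natrD; ring.
  - rewrite natrD natrM mulrDl -mulrA IH !exprS Hs Ok expr0.
    rewrite -addn2 -addn1 !natrD; ring.
have -> : (n.+2)%:R - 1 = (n.+1)%:R :> rat by rewrite -addn1 natrD addrK.
rewrite -H mulfK //.
by rewrite pnatr_eq0.
Qed.

Theorem lemma2p7 (k m : nat) (C : finType) (L : 'I_k.+1 -> {set C}) :
  (2 <= m)%N -> m_assignment L m ->
  (forall c d, c \in L ord0 -> d \in L ord_max ->
     Num.min ((((m%:R - 1) ^+ k - (-1) ^+ k) / m%:R) : rat)
             (((m%:R - 1) ^+ k - (-1) ^+ k) / m%:R + (-1) ^+ k)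
       <= (Ncount L c d)%:R) /\
  (exists A B : {set C * C},
     [/\ A :|: B = setX (L ord0) (L ord_max), A :&: B = set0,
         #|A| = m & #|B| = (m * (m - 1))%N] /\
         (forall c d, (c, d) \in A ->
            (((m%:R - 1) ^+ k - (-1) ^+ k) / m%:R + (-1) ^+ k : rat)
              <= (Ncount L c d)%:R) /\
         (forall c d, (c, d) \in B ->
            (((m%:R - 1) ^+ k - (-1) ^+ k) / m%:R : rat)
              <= (Ncount L c d)%:R)).
Proof.
case: m => [|[|n]] // _ HL.
rewrite sa_formula -signr_odd.
have I := @inv n C k L HL.
case Ok: (odd k) in I *; rewrite ?expr1 ?expr0.
- have apos := sa_pos n k Ok.
  have Hb : forall c d, c \in L ord0 -> d \in L ord_max ->
      (sa n k)%:R - 1 <= (Ncount L c d)%:R :> rat.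
    move=> c d Hc Hd; rewrite lerBlDr natr1 ler_nat -addn1.
    by case: (I c Hc) => _ /(_ d Hd).
  split.
    move=> c d Hc Hd; rewrite min_r; first exact: Hb.
    by rewrite lerBlDr lerDl.
  pose Q := fun c d => [forall e in L ord_max, (e != d) ==> (sa n k <= Ncount L c e)%N].
  have Hex : forall c, c \in L ord0 -> exists d, (d \in L ord_max) && Q c d.
    move=> c Hc; case: (I c Hc) => [[e0 Hlow] _].
    case E0: (e0 \in L ord_max).
    + exists e0; rewrite E0 /=; apply/forallP => e; apply/implyP => He.
      by apply/implyP => Hne; exact: Hlow.
    + have : L ord_max != set0 by rewrite -card_gt0 HL.
      case/set0Pn => d Hd; exists d; rewrite Hd /=.
      apply/forallP => e; apply/implyP => He; apply/implyP => _.
      apply: Hlow => //; apply/eqP => Ee; by rewrite -Ee He in E0.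
  have [A [B [HP [HA HB]]]] := @assemble _ _ _ _ Q (HL ord0) (HL ord_max) Hex.
  exists A, B; split => //; split.
  + move=> c d /HA /and3P [Hc Hd _]; exact: Hb.
  + move=> c d /HB [Hc Hd [d' /forallP Hq Hne]].
    rewrite ler_nat; have := Hq d; rewrite Hd /= eq_sym Hne; exact.
- split.
    move=> c d Hc Hd; rewrite min_l; last by rewrite lerDl.
    rewrite ler_nat; by case: (I c Hc) => /(_ d Hd).
  pose Q := fun c d => (sa n k + 1 <= Ncount L c d)%N.
  have Hex : forall c, c \in L ord0 -> exists d, (d \in L ord_max) && Q c d.
    move=> c Hc; case: (I c Hc) => _ [e He Hq]; exists e; by rewrite He.
  have [A [B [HP [HA HB]]]] := @assemble _ _ _ _ Q (HL ord0) (HL ord_max) Hex.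
  exists A, B; split => //; split.
  + move=> c d /HA /and3P [Hc Hd Hq]; by rewrite natr1 ler_nat -addn1.
  + move=> c d /HB [Hc Hd _].
    rewrite ler_nat; by case: (I c Hc) => /(_ d Hd).
Qed.
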